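(* Let $\mathbb{K}$ be a field of characteristic zero, let $p,q\in\mathbb{Z}^n_{\ge0}$ be nonzero vectors and let $\beta\in\mathbb{K}^n\setminus\{0\}$. Then the following are equivalent: (i) the derivations $\Delta^p_\beta$ and $\Delta^q_\beta$ of $\mathbb{K}[x_1,\ldots,x_n]$ generate a finite dimensional Lie algebra; (ii) $[\Delta^p_\beta,\Delta^q_\beta]=0$; (iii) $\langle\beta,p\rangle=\langle\beta,q\rangle$.
   Context: For $p\in\mathbb{Z}^n_{\ge0}$ and $\beta\in\mathbb{K}^n$, $\Delta^p_\beta:=x_1^{p_1}\cdots x_n^{p_n}\sum_{j=1}^n\beta_jx_j\partial_j$, where $\partial_j=\partial/\partial x_j$. $\langle\beta,u\rangle:=\sum_i\beta_iu_i$. The Lie bracket is the commutator of derivations. *)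

(* Defs.v *)
From HB Require Import structures.
From mathcomp Require Import all_boot all_order all_algebra.
From mathcomp Require Import mpoly.
Set Implicit Arguments. Unset Strict Implicit. Unset Printing Implicit Defensive.
Import Order.TTheory GRing.Theory.
Local Open Scope ring_scope.

(* Operators on K[x_1,...,x_n] (K-linear maps are represented as plain functions). *)
Definition op (K : fieldType) (n : nat) := {mpoly K[n]} -> {mpoly K[n]}.

Definition pairing (K : fieldType) (n : nat) (beta : 'rV[K]_n) (u : 'X_{1..n}) : K :=
  \sum_(i < n) beta 0 i * (u i)%:R.

Definition Delta (K : fieldType) (n : nat) (p : 'X_{1..n}) (beta : 'rV[K]_n) : op K n :=
  fun f => 'X_[p] * \sum_(j < n) (beta 0 j *: ('X_j * mderiv j f)).

Definition lie_bracket (K : fieldType) (n : nat) (D E : op K n) : op K n :=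
  fun f => D (E f) - E (D f).

Inductive lie_gen (K : fieldType) (n : nat) (D1 D2 : op K n) : op K n -> Prop :=
  | lg_gen1 : lie_gen D1 D2 D1
  | lg_gen2 : lie_gen D1 D2 D2
  | lg_zero : lie_gen D1 D2 (fun _ => 0)
  | lg_lin : forall (a : K) (D E : op K n), lie_gen D1 D2 D -> lie_gen D1 D2 E ->
      lie_gen D1 D2 (fun f => a *: D f + E f)
  | lg_br : forall D E : op K n, lie_gen D1 D2 D -> lie_gen D1 D2 E ->
      lie_gen D1 D2 (lie_bracket D E).

Definition fin_dim (K : fieldType) (n : nat) (L : op K n -> Prop) : Prop :=
  exists s : seq (op K n), forall D, L D ->
    exists c : 'I_(size s) -> K,
      D = (fun f => \sum_(i < size s) c i *: (nth (fun _ => 0) s i) f).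

(* Main.v *)
Require Import Defs.
From HB Require Import structures.
From mathcomp Require Import all_boot all_order all_algebra.
From mathcomp Require Import mpoly.
From mathcomp Require Import ring.
From Stdlib Require Import FunctionalExtensionality.
Import Order.TTheory GRing.Theory.
Local Open Scope ring_scope.

Section S.
Variables (K : fieldType) (n : nat) (beta : 'rV[K]_n).

Definition EE (f : {mpoly K[n]}) : {mpoly K[n]} :=
  \sum_(j < n) (beta 0 j *: ('X_j * mderiv j f)).

Lemma DeltaE p f : Delta p beta f = 'X_[p] * EE f.
Proof. by []. Qed.

Lemma EE_lin a f g : EE (a *: f + g) = a *: EE f + EE g.
Proof.
rewrite /EE scaler_sumr -big_split /=; apply: eq_bigr => j _.
by rewrite mderivD mderivZ mulrDr scalerDr -scalerAr !scalerA mulrC.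
Qed.

Lemma EE_mul f g : EE (f * g) = EE f * g + f * EE g.
Proof.
rewrite /EE mulr_suml mulr_sumr -big_split /=; apply: eq_bigr => j _.
rewrite mderivM mulrDr scalerDr; congr (_ + _).
  by rewrite -scalerAl mulrA.
by rewrite -scalerAr mulrCA.
Qed.

Lemma EE_X v : EE 'X_[v] = pairing beta v *: 'X_[v].
Proof.
rewrite /EE /pairing scaler_suml; apply: eq_bigr => j _.
rewrite mderivX -scalerAr -scalerA; congr (_ *: _).
case: (posnP (v j)) => hv.
  by rewrite hv !scale0r.
rewrite -mpolyXD addmC submK //; by rewrite lep1mP -lt0n.
Qed.

Lemma Delta_lin p a f g : Delta p beta (a *: f + g) = a *: Delta p beta f + Delta p beta g.
Proof. by rewrite !DeltaE EE_lin mulrDr scalerAr. Qed.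

Lemma Delta_br u v f :
  lie_bracket (Delta u beta) (Delta v beta) f =
  (pairing beta v - pairing beta u) *: Delta (u + v) beta f.
Proof.
rewrite /lie_bracket !DeltaE !EE_mul !EE_X mpolyXD.
rewrite -!mul_mpolyC rmorphB /=.
ring.
Qed.

Lemma EE0 : EE 0 = 0.
Proof. by rewrite /EE big1 // => j _; rewrite mderiv0 mulr0 scaler0. Qed.

Lemma Delta_lin2 u x y f g : Delta u beta (x *: f + y *: g) = x *: Delta u beta f + y *: Delta u beta g.
Proof.
rewrite !DeltaE EE_lin -[y *: g]addr0 EE_lin EE0 addr0.
by rewrite mulrDr -!scalerAr.
Qed.

Lemma Delta_X u w : Delta u beta 'X_[w] = pairing beta w *: 'X_[u + w].
Proof. by rewrite DeltaE EE_X -scalerAr mpolyXD. Qed.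

Lemma pairingD u v : pairing beta (u + v)%MM = pairing beta u + pairing beta v.
Proof.
rewrite /pairing -big_split /=; apply: eq_bigr => i _.
by rewrite mnmDE natrD mulrDr.
Qed.

Lemma pairingU j : pairing beta U_(j)%MM = beta 0 j.
Proof.
rewrite /pairing (bigD1 j) //= big1 ?addr0; first by rewrite mnm1E eqxx mulr1.
by move=> i hi; rewrite mnm1E eq_sym (negbTE hi) mulr0.
Qed.

Lemma beta_nz : beta != 0 -> exists j, beta 0 j != 0.
Proof.
move=> hb; case: (pickP (fun j => beta 0 j != 0)) => [j hj|h]; first by exists j.
exfalso; move/eqP: hb; apply; apply/matrixP => i j.
by rewrite (ord1 i) mxE; move: (h j) => /= /negbFE /eqP.
Qed.

End S.

Section M.
Variables (K : fieldType) (n : nat) (p q : 'X_{1..n}) (beta : 'rV[K]_n).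
Hypothesis hbeta : beta != 0.
Hypotheses (hp : p != 0%MM) (hq : q != 0%MM).

Lemma br_iff :
  lie_bracket (Delta p beta) (Delta q beta) = (fun _ => 0) <->
     pairing beta p = pairing beta q.
Proof.
split.
  move=> h; have [j hj] := @beta_nz K n beta hbeta.
  have := f_equal (fun F => F 'X_[U_(j)]) h => /=.
  rewrite Delta_br Delta_X pairingU => /(f_equal (mcoeff (p + q + U_(j))%MM)).
  rewrite !mcoeffZ mcoeffX eqxx mulr1 mcoeff0 => /eqP.
  rewrite mulf_eq0 (negbTE hj) orbF subr_eq0 => /eqP ->. done.
move=> e; apply: functional_extensionality => f.
by rewrite Delta_br e subrr scale0r.
Qed.

Lemma ii_i : lie_bracket (Delta p beta) (Delta q beta) = (fun _ => 0) ->
  fin_dim (lie_gen (Delta p beta) (Delta q beta)).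
Proof.
move=> h; have hc f : Delta p beta (Delta q beta f) = Delta q beta (Delta p beta f).
  by apply/eqP; rewrite -subr_eq0; apply/eqP; exact: (f_equal (fun F => F f) h).
have key : forall D, lie_gen (Delta p beta) (Delta q beta) D ->
  exists a b, forall f, D f = a *: Delta p beta f + b *: Delta q beta f.
  move=> D0; elim => [|||a D E _ [a1 [b1 h1]] _ [a2 [b2 h2]]|D E _ [a1 [b1 h1]] _ [a2 [b2 h2]]].
  - by exists 1, 0 => f; rewrite scale1r scale0r addr0.
  - by exists 0, 1 => f; rewrite scale1r scale0r add0r.
  - by exists 0, 0 => f; rewrite !scale0r addr0.
  - exists (a * a1 + a2), (a * b1 + b2) => f; rewrite h1 h2 !scalerDl -!scalerA scalerDr.
    by rewrite addrACA.
  - exists 0, 0 => f; rewrite !scale0r addr0 /lie_bracket h1 h2 !h1 !h2.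
    rewrite !Delta_lin2 !scalerDr (hc f) -!mul_mpolyC.
    ring.
exists [:: Delta p beta; Delta q beta] => D /key [a [b hab]].
exists (fun i : 'I_2 => if val i == 0%N then a else b).
apply: functional_extensionality => f.
by rewrite hab /= big_ord_recl big_ord_recl big_ord0 addr0.
Qed.

Let L := lie_gen (Delta p beta) (Delta q beta).

Lemma chain : pairing beta p != pairing beta q -> forall k,
  exists u v (D1 D2 : op K n), [/\ L D1, L D2, (forall f, D1 f = Delta u beta f),
    (forall f, D2 f = Delta v beta f) & [/\ pairing beta u != pairing beta v,
    u != 0%MM, v != 0%MM & (k <= mdeg u)%N]].
Proof.
move=> hpq; elim => [|k [u [v [D1 [D2 [L1 L2 h1 h2 [huv hu hv hk]]]]]]].
  by exists p, q, (Delta p beta), (Delta q beta); split; try constructor.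
set c := pairing beta v - pairing beta u.
have hc : c != 0 by rewrite subr_eq0 eq_sym.
set Dw := fun f => c^-1 *: lie_bracket D1 D2 f + (fun _ => 0) f.
have Lw : L Dw by apply: lg_lin; [apply: lg_br|apply: lg_zero].
have hw f : Dw f = Delta (u + v) beta f.
  rewrite /Dw addr0 /lie_bracket !h1 !h2.
  rewrite -[_ - _]/(lie_bracket (Delta u beta) (Delta v beta) f).
  by rewrite Delta_br scalerA mulVf // scale1r.
have hw0 : (u + v)%MM != 0%MM by rewrite mnmD_eq0 negb_and hu.
have hdeg : (k < mdeg (u + v))%N.
  rewrite mdegD; have : (0 < mdeg v)%N by rewrite lt0n mdeg_eq0.
  by move=> h0; rewrite -addn1 leq_add.
have [pv0|pvn0] := eqVneq (pairing beta v) 0.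
- exists (u + v)%MM, v, Dw, D2; split => //; split => //.
  rewrite pairingD pv0 addr0; by move: huv; rewrite pv0.
- exists (u + v)%MM, u, Dw, D1; split => //; split => //.
  by rewrite pairingD -subr_eq0 addrAC subrr add0r.
Qed.

Lemma i_ii : fin_dim L -> pairing beta p = pairing beta q.
Proof.
move=> [s hs]; apply/eqP; apply/negPn/negP => hpq.
have [j hj] := @beta_nz K n beta hbeta.
set g : {mpoly K[n]} := 'X_[U_(j)].
set M := (\max_(i < size s) msize (nth (fun _ => 0%R : {mpoly K[n]}) s i g))%N.
have [u [v [D1 [D2 [L1 _ h1 _ [_ hu _ hk]]]]]] := chain hpq M.
have [c hc] := hs _ L1.
have := f_equal (fun F => (F g)@_(u + U_(j))%MM) hc => /=.
rewrite h1 Delta_X pairingU mcoeffZ mcoeffX eqxx mulr1 raddf_sum /= big1.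
  by move/eqP; rewrite (negbTE hj).
move=> i _; rewrite mcoeffZ memN_msupp_eq0 ?mulr0 //.
apply: msize_mdeg_ge; rewrite mdegD mdeg1.
have hi : (msize (nth (fun _ => 0%R : {mpoly K[n]}) s i g) <= M)%N.
  by rewrite /M; apply: leq_bigmax.
apply: (leq_trans hi); apply: (leq_trans hk); rewrite addn1.
by apply: leqnSn.
Qed.

End M.

Theorem lemma4 (K : fieldType) (n : nat) (charK : [pchar K] =i pred0)
  (p q : 'X_{1..n}) (hp : p != 0%MM) (hq : q != 0%MM)
  (beta : 'rV[K]_n) (hbeta : beta != 0) :
  (fin_dim (lie_gen (Delta p beta) (Delta q beta)) <->
     lie_bracket (Delta p beta) (Delta q beta) = (fun _ => 0)) /\
  (lie_bracket (Delta p beta) (Delta q beta) = (fun _ => 0) <->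
     pairing beta p = pairing beta q).
Proof.
have B := @br_iff K n p q beta hbeta.
split => //; split; last exact: (@ii_i K n p q beta).
by move=> h; apply/B; apply: (@i_ii K n p q beta hbeta hp hq).
Qed.
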